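(* For a graph $G$, $\gamma_{(2,2,0)}(G)=3$ if and only if $\gamma_{\times2,t}(G)=\gamma(G)+1=3$.
   Context: All graphs are finite and simple; $N(v)$ is the open neighbourhood. $\gamma_{(2,2,0)}(G)$ is the minimum of $\sum_v f(v)$ over functions $f:V(G)\to\{0,1,2\}$ such that $\sum_{u\in N(v)}f(u)\ge2$ for every $v$ with $f(v)\in\{0,1\}$. $\gamma(G)$ is the domination number and $\gamma_{\times2,t}(G)$ is the minimum size of $S\subseteq V(G)$ such that every vertex has at least two neighbours in $S$ (defined when $G$ has minimum degree at least $2$). *)

(* Defs.v *)
From mathcomp Require Import all_boot all_order.
Set Implicit Arguments. Unset Strict Implicit. Unset Printing Implicit Defensive.

Definition simple_graph (T : finType) (e : rel T) : Prop :=
  symmetric e /\ irreflexive e.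

Definition nbhd (T : finType) (e : rel T) (v : T) : {set T} := [set u | e v u].

Definition is_220_fun (T : finType) (e : rel T) (f : {ffun T -> 'I_3}) : bool :=
  [forall v, (f v < 2) ==> (2 <= \sum_(u in nbhd e v) (f u : nat))].

Definition weight (T : finType) (f : {ffun T -> 'I_3}) : nat := \sum_v (f v : nat).

(* gamma_(2,2,0)(G): minimum weight; the default 2|V| is attained by the
   constant-2 function (always feasible), so this is the true minimum. *)
Definition gamma_220 (T : finType) (e : rel T) : nat :=
  \big[minn/(#|T| * 2)]_(f : {ffun T -> 'I_3} | is_220_fun e f) weight f.

Definition dominating (T : finType) (e : rel T) (S : {set T}) : bool :=
  [forall v, (v \in S) || [exists u in S, e v u]].

(* domination number; default #|V| is attained by S = V *)
Definition gamma (T : finType) (e : rel T) : nat :=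
  \big[minn/#|T|]_(S : {set T} | dominating e S) #|S|.

Definition min_deg_ge2 (T : finType) (e : rel T) : Prop :=
  forall v : T, 2 <= #|nbhd e v|.

Definition double_total_dominating (T : finType) (e : rel T) (S : {set T}) : bool :=
  [forall v, 2 <= #|nbhd e v :&: S|].

(* gamma_{x2,t}(G); meaningful only when min_deg_ge2 e holds, in which case
   S = V is feasible and the default #|V| is attained. *)
Definition gamma_x2t (T : finType) (e : rel T) : nat :=
  \big[minn/#|T|]_(S : {set T} | double_total_dominating e S) #|S|.

(* Main.v *)
Require Import Defs.
From mathcomp Require Import all_boot all_order.
From mathcomp Require Import zify.

Section BM.
Variables (I : finType) (P : pred I) (F : I -> nat) (d : nat).

Lemma bigmin_le i : P i -> \big[minn/d]_(j | P j) F j <= F i.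
Proof.
move=> Pi; have : i \in index_enum I by rewrite mem_index_enum.
elim: (index_enum I) => [|x r IH] //=.
rewrite big_cons inE; case/orP=> [/eqP<-|ir]; first by rewrite Pi geq_minl.
case: (P x); last exact: IH.
by rewrite (leq_trans (geq_minr _ _)) ?IH.
Qed.

Lemma bigmin_ge n : n <= d -> (forall i, P i -> n <= F i) ->
  n <= \big[minn/d]_(j | P j) F j.
Proof.
move=> nd H; apply: (big_ind (fun x => n <= x)) => //.
by move=> x y ?? ; rewrite leq_min; apply/andP.
Qed.

Lemma bigmin_attain : \big[minn/d]_(j | P j) F j = d \/
  exists2 i, P i & \big[minn/d]_(j | P j) F j = F i.
Proof.
apply: (big_ind (fun x => x = d \/ exists2 i, P i & x = F i)); first by left.
  move=> x y Hx Hy; rewrite /minn; case: ifP => _; [exact: Hx|exact: Hy].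
by move=> i Pi; right; exists i.
Qed.
End BM.

Section G.
Variables (T : finType) (e : rel T).

Lemma sum_out (f : T -> nat) (A : {pred T}) a : a \notin A ->
  \sum_(u in A) f u + f a <= \sum_u f u.
Proof.
move=> aA; rewrite [X in _ <= X](bigID (fun u => u \in A)) /= leq_add2l.
by rewrite (bigD1 a) //= leq_addr.
Qed.

Lemma sum_in (f : T -> nat) (A : {pred T}) a : a \in A ->
  f a <= \sum_(u in A) f u.
Proof. by move=> aA; rewrite (bigD1 a) //= leq_addr. Qed.

Lemma sum_ind (A S : {set T}) :
  \sum_(u in A) ((u \in S) : nat) = #|A :&: S|.
Proof.
rewrite -sum1_card [RHS]big_mkcond [LHS]big_mkcond /=; apply: eq_bigr => u _.
by rewrite inE; case: (u \in A); case: (u \in S).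
Qed.

Lemma sum_indT (S : {set T}) : \sum_u ((u \in S) : nat) = #|S|.
Proof.
rewrite -sum1_card [RHS]big_mkcond /=; apply: eq_bigr => u _.
by case: (u \in S).
Qed.

Definition ind1 (S : {set T}) : {ffun T -> 'I_3} :=
  [ffun v => if v \in S then Ordinal (isT : 1 < 3) else ord0].
Definition ind2 (S : {set T}) : {ffun T -> 'I_3} :=
  [ffun v => if v \in S then Ordinal (isT : 2 < 3) else ord0].

Lemma val_ind1 S v : (ind1 S v : nat) = (v \in S).
Proof. by rewrite ffunE; case: (v \in S). Qed.

Lemma weight_ind1 S : weight (ind1 S) = #|S|.
Proof. by rewrite /weight; under eq_bigr do rewrite val_ind1; rewrite sum_indT. Qed.

Lemma weight_ind2 S : weight (ind2 S) = 2 * #|S|.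
Proof.
rewrite /weight (eq_bigr (fun v => if v \in S then 2 else 0)) => [|v _]; last first.
  by rewrite ffunE; case: (v \in S).
by rewrite -big_mkcond sum_nat_const mulnC.
Qed.

Lemma ind1_220 {S} : double_total_dominating e S -> is_220_fun e (ind1 S).
Proof.
move=> /forallP H; apply/forallP => v; apply/implyP => _.
by under eq_bigr do rewrite val_ind1; rewrite sum_ind.
Qed.

Lemma ind2_220 {S} : dominating e S -> is_220_fun e (ind2 S).
Proof.
move=> /forallP H; apply/forallP => v; apply/implyP.
rewrite ffunE; case vS: (v \in S) => //= _.
move: (H v); rewrite vS /= => /existsP [u /andP [uS evu]].
have := sum_in (fun u => (ind2 S u : nat)) (nbhd e v) u.
by rewrite ffunE uS; apply; rewrite inE.
Qed.

Lemma g220_le {f} : is_220_fun e f -> gamma_220 e <= weight f.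
Proof. by move=> H; exact: (@bigmin_le _ _ (fun f => weight f) _ _ H). Qed.
Lemma gamma_le {S} : dominating e S -> gamma e <= #|S|.
Proof. move=> H. rewrite /gamma. exact: (@bigmin_le _ (fun S => dominating e S) (fun S => #|S|) #|T| S H). Qed.
Lemma gx2t_le {S} : double_total_dominating e S -> gamma_x2t e <= #|S|.
Proof. move=> H. rewrite /gamma_x2t. exact: (@bigmin_le _ (fun S => double_total_dominating e S) (fun S => #|S|) #|T| S H). Qed.

Hypothesis G : simple_graph e.

Lemma nbhd_sum_le (f : {ffun T -> 'I_3}) x :
  \sum_(u in nbhd e x) (f u : nat) + f x <= weight f.
Proof. apply: sum_out; rewrite inE; by case: G => _ ->. Qed.

Lemma dom_single {f : {ffun T -> 'I_3}} {a} : is_220_fun e f -> (f a : nat) = 2 ->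
  weight f <= 3 -> dominating e [set a].
Proof.
move=> /forallP H fa w3; apply/forallP => x; case: (eqVneq x a) => [->|xa].
  by rewrite in_set1 eqxx.
apply/orP; right; apply/existsP; exists a; rewrite in_set1 eqxx /=.
case exa: (e x a) => //; exfalso.
have h1 := sum_out (fun u => (f u : nat)) [set x] a.
rewrite in_set1 eq_sym xa big_set1 /= in h1; have {}h1 := h1 isT.
have h2 := sum_out (fun u => (f u : nat)) (nbhd e x) a.
rewrite inE exa /= in h2; have {}h2 := h2 isT.
have := H x; rewrite /weight in w3 h1 h2 *.
have -> : (f x < 2) = true by lia.
move=> /= h3; lia.
Qed.

Lemma L4 (f : {ffun T -> 'I_3}) : is_220_fun e f -> weight f <= 2 -> gamma e <= 1.
Proof.
move=> H w2.
have z2 : forall x, (f x : nat) = 0 \/ (f x : nat) = 2.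
  move=> x; have := nbhd_sum_le f x; have := ltn_ord (f x).
  move/forallP: H => /(_ x) /implyP; case: (ltnP (f x) 2) => [lt /(_ isT)|]; lia.
case: (pickP (fun v => (f v : nat) == 2)) => [a /eqP fa | none].
  have D : dominating e [set a].
    by move: (@dom_single f a H fa); apply; lia.
  by apply: (@leq_trans #|[set a]|); [exact: gamma_le | rewrite cards1].
have f0 : forall x, (f x : nat) = 0.
  by move=> x; case: (z2 x) => // h; move: (none x); rewrite h.
suff D : dominating e set0.
  by apply: (@leq_trans #|set0|); [exact: gamma_le | rewrite cards0].
apply/forallP => x; exfalso.
move/forallP: H => /(_ x) /implyP; rewrite f0 => /(_ isT).
by rewrite big1 // => u _; rewrite f0.
Qed.

End G.
Arguments g220_le {T e f}.
Arguments gamma_le {T e S}.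
Arguments gx2t_le {T e S}.
Arguments ind1_220 {T e S}.
Arguments ind2_220 {T e S}.
Arguments weight_ind1 {T} S.
Arguments weight_ind2 {T} S.
Arguments dom_single {T e f a}.
Arguments L4 {T e} G {f}.
Arguments sum_ind {T}.
Arguments sum_indT {T}.

Theorem theorem32 (T : finType) (e : rel T) (G : simple_graph e) :
  gamma_220 e = 3 <->
  (min_deg_ge2 e /\ gamma_x2t e = 3 /\ gamma e + 1 = 3).
Proof.
split.
- move=> H3.
  have noW2 : forall g, is_220_fun e g -> 2 < weight g.
    by move=> g Hg; have := g220_le Hg; lia.
  have [|[f Hf wf]] := bigmin_attain _ (fun f => is_220_fun e f) (fun f => weight f) (#|T| * 2).
    rewrite -/(gamma_220 e) H3; lia.
  rewrite -/(gamma_220 e) H3 in wf.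
  have f_le1 : forall v, (f v : nat) <= 1.
    move=> a; have := ltn_ord (f a); case: (ltnP (f a) 2) => // h1 h2.
    have fa : (f a : nat) = 2 by lia.
    have D := dom_single Hf fa (eq_leq (esym wf)).
    by have := noW2 _ (ind2_220 D); rewrite weight_ind2 cards1.
  pose S := [set v | (f v : nat) == 1].
  have fS : forall v, (f v : nat) = (v \in S).
    move=> v; rewrite inE; have := f_le1 v; case: (f v : nat) => [|[|]] //.
  have cS : #|S| = 3 by rewrite wf /weight; under eq_bigr do rewrite fS; rewrite sum_indT.
  have DS : double_total_dominating e S.
    apply/forallP => v; move/forallP: Hf => /(_ v) /implyP.
    have -> : (f v < 2) = true by have := f_le1 v; lia.
    by move=> /(_ isT); under eq_bigr do rewrite fS; rewrite sum_ind.
  have cT : 3 <= #|T| by rewrite -cS max_card.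
  split.
    move=> v; move/forallP: DS => /(_ v) h; apply: (leq_trans h).
    exact/subset_leq_card/subsetIl.
  split.
    apply/eqP; rewrite eqn_leq; apply/andP; split; first by rewrite -cS gx2t_le.
    apply: bigmin_ge => // S' DS'.
    by have := noW2 _ (ind1_220 DS'); rewrite weight_ind1.
  have g2 : 2 <= gamma e.
    apply: bigmin_ge; first lia.
    by move=> D DD; have := noW2 _ (ind2_220 DD); rewrite weight_ind2; lia.
  suff : gamma e <= 2 by lia.
  have : 0 < #|S| by rewrite cS.
  case/card_gt0P => a aS.
  have cSa := cardsD1 a S; rewrite aS cS in cSa.
  have : 0 < #|S :\ a| by lia.
  case/card_gt0P => b bSa.
  have cSab := cardsD1 b (S :\ a); rewrite bSa in cSab.
  have ba : b != a by move: bSa; rewrite !inE => /andP [].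
  have D : dominating e [set a; b].
    apply/forallP => x; apply/orP; right; apply/existsP.
    case ea: (e x a); first by exists a; rewrite !inE eqxx ea.
    case eb: (e x b); first by exists b; rewrite !inE eqxx eb orbT.
    exfalso; move/forallP: DS => /(_ x) h.
    have : nbhd e x :&: S \subset (S :\ a) :\ b.
      apply/subsetP => u; rewrite !inE => /andP [exu uS]; rewrite uS andbT.
      by apply/andP; split; apply/eqP => E; subst u; congruence.
    move/subset_leq_card; lia.
  by apply: (@leq_trans #|[set a; b]|); [exact: gamma_le | rewrite cards2 eq_sym ba].
- case=> md [H3 Hg].
  have [S DS cS] : exists2 S, double_total_dominating e S & #|S| = 3.
    have [h|[S DS h]] := bigmin_attain _ (fun S => double_total_dominating e S)
      (fun S => #|S|) #|T|.
      exists setT; last by rewrite cardsT -h.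
      by apply/forallP => v; rewrite setIT; apply: md.
    by exists S; rewrite // -h.
  have cT : 3 <= #|T| by rewrite -cS max_card.
  apply/eqP; rewrite eqn_leq; apply/andP; split.
    by rewrite -cS -weight_ind1 g220_le // ind1_220.
  apply: bigmin_ge; first lia.
  move=> g Hg2; case: (ltnP 2 (weight g)) => // w2.
  have := L4 G Hg2 w2; lia.
Qed.
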